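(* Assume that for every time index $k \ge 0$ there exists $B_k < \infty$ such that $w_k(x_{0:k}) \le B_k$ for all $x_{0:k} \in \mathcal{S}_k$. Then for any $k>0$, the Markov kernel $$K_k^{draw}(x_{0:k}, dx_{0:k}') = \alpha_k(x_{0:k},x_{0:k}')\,(\widehat{\pi}_{k-1}^{(N_p)}\times q_k)(dx_{0:k}') + \Big(1 - \int_{E_k}\alpha_k(x_{0:k},y_{0:k})\,(\widehat{\pi}_{k-1}^{(N_p)}\times q_k)(dy_{0:k})\Big)\delta_{x_{0:k}}(dx_{0:k}'),$$ with $\alpha_k(x_{0:k},x_{0:k}') = \min\big(1, w_k(x_{0:k}')/w_k(x_{0:k})\big)$, is uniformly ergodic with invariant distribution $$\breve{\pi}_k^{(N_p)}(dx_{0:k}) = \frac{\pi_{k/k-1}(x_{0:k-1})\,(\widehat{\pi}_{k-1}^{(N_p)}\times\overline{\pi}_k)(dx_{0:k})}{\widehat{\pi}_{k-1}^{(N_p)}(\pi_{k/k-1})}.$$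
   Context: Let $(E,\mathcal{F})$ be a measurable space and $E_k = E^{k+1}$ with product $\sigma$-algebra; densities are with respect to a fixed reference measure. A hidden Markov model has initial density $p(x_0)$, transition densities $p(x_l\mid x_{l-1})$ and likelihoods $p(z_l\mid x_l)$ for fixed observations $z_1,z_2,\dots$. Let $\gamma_k(x_{0:k}) = p(x_0)\prod_{l=1}^k p(x_l\mid x_{l-1})p(z_l\mid x_l)$, $Z_k = \int\gamma_k\in(0,\infty)$, $\pi_k = \gamma_k/Z_k$, $\mathcal{S}_k = \{x_{0:k}:\pi_k(x_{0:k})>0\}$. For a measure $\mu$ and function $f$, $\mu(f)=\int f\,d\mu$. Proposals: $q_0$ a probability density on $E$; for $k>0$, $q_k(x_{0:k-1},x_k)$ a probability density in $x_k$ given $x_{0:k-1}$; for a probability measure $\mu$ on $E_{k-1}$, $(\mu\times q_k)(dx_{0:k}) = \mu(dx_{0:k-1})q_k(x_{0:k-1},dx_k)$. Weights: $w_0=\gamma_0/q_0$, $w_k(x_{0:k}) = \gamma_k(x_{0:k})/(\gamma_{k-1}(x_{0:k-1})q_k(x_{0:k-1},x_k))$. Further, with $\pi_k(x_{0:k-1}) = \int_E \pi_k(x_{0:k})\,dx_k$, define $\overline{\pi}_k(x_{0:k-1},x_k) = \pi_k(x_{0:k})/\pi_k(x_{0:k-1}) = p(x_k\mid x_{k-1},z_k)$ and $\pi_{k/k-1}(x_{0:k-1}) = \pi_k(x_{0:k-1})/\pi_{k-1}(x_{0:k-1})$ (proportional to $p(z_k\mid x_{k-1})$). Here $\widehat{\pi}_{k-1}^{(N_p)}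 = \frac{1}{N_p}\sum_{i=1}^{N_p}\delta_{x_{0:k-1}^i}$ is the empirical measure of the $N_p$ samples produced at time $k-1$ by the sequential MCMC algorithm: at time $0$ a Markov chain with kernel $K_0^{draw}$ (propose from $q_0$, accept with probability $\min(1,w_0(x')/w_0(x))$) started in $\mathcal{S}_0$; at each time $l>0$ a Markov chain started in $\mathcal{S}_l$ whose iterations apply $K_l^{draw}$ (defined as in the claim with $l$ in place of $k$) followed by a refinement Markov kernel leaving $\breve{\pi}_l^{(N_p)}$ invariant. *)

(* Defs.v *)
From HB Require Import structures.
From mathcomp Require Import all_boot all_order all_algebra.
From mathcomp Require Import all_classical all_reals all_analysis.
Set Implicit Arguments. Unset Strict Implicit. Unset Printing Implicit Defensive.
Import Order.TTheory GRing.Theory Num.Theory.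
Local Open Scope ring_scope.

Section SMCMC.
Context {R : realType} {d : measure_display} {E : measurableType d}.
Variable lam : {measure set E -> \bar R}.
Variable p0 : E -> R.
Variable trans : E -> E -> R.                    (* trans x x' = p(x' | x) *)
Variable lik : nat -> E -> R.                    (* lik l x = p(z_l | x_l = x) *)
Variable q : forall k : nat, k.-tuple E -> E -> R.
(* q k x_{0:k-1} x_k = q_k(x_{0:k-1}, x_k) for k > 0;
   q 0 [tuple] x_0 plays the role of q_0(x_0). *)

Fixpoint chain (l : nat) (prev : E) (s : seq E) : R :=
  match s with
  | [::] => 1
  | x :: s' => trans prev x * lik l x * chain l.+1 x s'
  end.

(* gamma_k(x_{0:k}) for s = [:: x_0; ...; x_k];  by convention the empty
   path has gamma = 1 (so that w_0 = gamma_0 / q_0 is the case k = 0 of w_k) *)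
Definition gamma (s : seq E) : R :=
  match s with
  | [::] => 1
  | x0 :: s' => p0 x0 * chain 1 x0 s'
  end.

Fixpoint itint (n : nat) (f : seq E -> \bar R) : \bar R :=
  match n with
  | 0 => f [::]
  | n'.+1 => (\int[lam]_x itint n' (fun s => f (x :: s)))%E
  end.

Definition Z (k : nat) : \bar R := itint k.+1 (fun s => (gamma s)%:E).

Definition pi (k : nat) (s : seq E) : R := gamma s / fine (Z k).

Definition inS (k : nat) (s : seq E) : Prop := 0 < pi k s.

Definition snoc k (x : k.-tuple E) (y : E) : k.+1.-tuple E := [tuple of rcons x y].
Definition prefix k (x : k.+1.-tuple E) : k.-tuple E :=
  [tuple tnth x (widen_ord (leqnSn k) i) | i < k].
Definition tlast k (x : k.+1.-tuple E) : E := tnth x ord_max.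

Definition ratio (a b : R) : \bar R := if b == 0 then +oo%E else (a / b)%:E.

(* incremental weight w_k(x_{0:k}) = gamma_k / (gamma_{k-1} q_k);
   for k = 0 this is w_0 = gamma_0 / q_0 *)
Definition weight k (x : k.+1.-tuple E) : \bar R :=
  ratio (gamma x) (gamma (prefix x) * q (prefix x) (tlast x)).

Definition piMarg k (x : k.-tuple E) : R :=
  fine (\int[lam]_y (pi k (snoc x y))%:E)%E.

Definition pibar k (x : k.-tuple E) (y : E) : R := pi k (snoc x y) / piMarg x.

Definition pikk1 k (x : k.-tuple E) : R := piMarg x / pi k.-1 x.

Section Empirical.
Variables (k N : nat) (xs : 'I_N -> k.-tuple E).
(* samples x^1_{0:k-1}, ..., x^N_{0:k-1}; empirical measure pihat_{k-1} *)

Definition emp_int (g : k.-tuple E -> R) : R := N%:R^-1 * \sum_(i < N) g (xs i).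

Definition empmix (r : k.-tuple E -> E -> R) (f : k.+1.-tuple E -> R) : R :=
  N%:R^-1 * \sum_(i < N)
     fine (\int[lam]_y (f (snoc (xs i) y) * r (xs i) y)%:E)%E.

Definition alpha (x x' : k.+1.-tuple E) : R :=
  Num.min 1 (fine (weight x') / fine (weight x)).

(* int f(x') K_k^draw(x, dx') *)
Definition Kint (f : k.+1.-tuple E -> R) (x : k.+1.-tuple E) : R :=
  empmix (@q k) (fun y => alpha x y * f y)
  + (1 - empmix (@q k) (alpha x)) * f x.

Fixpoint Kn (n : nat) (x : k.+1.-tuple E) (A : set (k.+1.-tuple E)) : R :=
  match n with
  | 0 => \1_A x
  | n'.+1 => Kint (fun y => Kn n' y A) x
  end.

Definition pibreve_int (f : k.+1.-tuple E -> R) : R :=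
  empmix (@pibar k) (fun x => pikk1 (prefix x) * f x) / emp_int (@pikk1 k).

Definition pibreve (A : set (k.+1.-tuple E)) : R := pibreve_int (\1_A).

End Empirical.
End SMCMC.

(* Main.v *)
Require Import Defs.
From HB Require Import structures.
From mathcomp Require Import all_boot all_order all_algebra.
From mathcomp Require Import all_classical all_reals all_analysis.
Import Order.TTheory GRing.Theory Num.Theory.
Local Open Scope ring_scope.
From mathcomp Require Import measurable_realfun.
From mathcomp Require Import ring lra.

Set Implicit Arguments. Unset Strict Implicit. Unset Printing Implicit Defensive.
Import Order.TTheory GRing.Theory Num.Theory.

Section InvSec.
Local Open Scope classical_set_scope.
Lemma measurable_inv (R : realType) : measurable_fun setT (@GRing.inv R).
Proof.
have -> : [set: R] = [set 0] `|` ~` [set 0] by rewrite setUv.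
apply/measurable_funU => //; first by apply: measurableC.
split.
- move=> _ B mB; have [B0|B0] := pselect (B (0:R)^-1).
  + rewrite (_ : _ `&` _ = [set 0]) //; apply/seteqP; split=> [x [->]//|x ->]; by split.
  + rewrite (_ : _ `&` _ = set0) //; apply/seteqP; split=> [x [-> /B0]//|x //].
- apply: open_continuous_measurable_fun.
  + by apply: closed_openC; exact: closed_eq.
  + move=> x; rewrite inE => /eqP x0; exact: inv_continuous.
Qed.
End InvSec.


Ltac sh := match goal with |- ?G => idtac "GOAL:" G end.
Section Jsec.
Context {R : realType} {d : measure_display} {E : measurableType d}.
Variable lam : {measure set E -> \bar R}.

Definition J (rho F : E -> R) : R := \int[lam]_y (F y * rho y).

Definition dens (rho : E -> R) := (forall y, 0 <= rho y) /\ measurable_fun setT rho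
  /\ lam.-integrable setT (EFin \o rho).
Definition bnd (F : E -> R) := measurable_fun setT F /\ exists M, forall y, `|F y| <= M.

Lemma J_int rho F : dens rho -> bnd F ->
  lam.-integrable setT (EFin \o (fun y => F y * rho y)).
Proof.
move=> [r0 [mr ir]] [mF [M FM]].
apply: (@le_integrable _ _ _ lam _ measurableT _ (fun y => (`|M| * rho y)%:E)).
- by apply/measurable_EFinP; exact: measurable_funM.
- move=> y _ /=; rewrite lee_fin !normrM normr_id (ger0_norm (r0 y)).
  by rewrite ler_wpM2r // (le_trans (FM y)) // ler_norm.
- apply: (eq_integrable measurableT _ _ _ (integrableZl measurableT `|M| ir)) => y _ /=.
  by rewrite EFinM.
Qed.

Lemma JD rho F G : dens rho -> bnd F -> bnd G ->
  J rho (fun y => F y + G y) = J rho F + J rho G.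
Proof.
move=> rh bF bG; rewrite /J -RintegralD //; try exact: J_int.
by apply: eq_Rintegral => y _; rewrite mulrDl.
Qed.

Lemma JZ rho F c : dens rho -> bnd F -> J rho (fun y => c * F y) = c * J rho F.
Proof.
move=> rh bF; rewrite /J -RintegralZl //; last exact: J_int.
by apply: eq_Rintegral => y _; rewrite mulrA.
Qed.

Lemma J_ge0 rho F : dens rho -> (forall y, 0 <= F y) -> 0 <= J rho F.
Proof.
move=> [r0 _] F0; apply: Rintegral_ge0 => y _; exact: mulr_ge0.
Qed.

Lemma J_le rho F G : dens rho -> bnd F -> bnd G -> (forall y, F y <= G y) ->
  J rho F <= J rho G.
Proof.
move=> rh bF bG FG; apply: le_Rintegral => //; try exact: J_int.
move=> y _; apply: ler_wpM2r => //; exact: rh.1.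
Qed.

Lemma J_ext rho rho' F G : (forall y, F y * rho y = G y * rho' y) -> J rho F = J rho' G.
Proof. by move=> FG; apply: eq_Rintegral => y _; exact: FG. Qed.

Lemma J_EFin rho F : dens rho -> bnd F ->
  (J rho F)%:E = (\int[lam]_y (F y * rho y)%:E)%E.
Proof.
move=> rh bF; rewrite /J /Rintegral fineK //.
exact: (integrable_fin_num measurableT (J_int rh bF)).
Qed.

Lemma bnd_cst c : bnd (fun _ => c).
Proof. by split=> //; exists `|c|. Qed.

Lemma bndD F G : bnd F -> bnd G -> bnd (fun y => F y + G y).
Proof.
move=> [mF [M FM]] [mG [M' GM]]; split; first exact: measurable_funD.
by exists (M + M') => y; apply: le_trans (ler_normD _ _) (lerD (FM y) (GM y)).
Qed.

Lemma bndM F G : bnd F -> bnd G -> bnd (fun y => F y * G y).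
Proof.
move=> [mF [M FM]] [mG [M' GM]]; split; first exact: measurable_funM.
exists (M * M') => y; rewrite normrM; apply: ler_pM => //; exact: FM.
Qed.

Lemma bnd01 (F : E -> R) : measurable_fun setT F -> (forall y, 0 <= F y <= 1) -> bnd F.
Proof.
move=> mF F01; split=> //; exists 1 => y; have /andP[a b] := F01 y.
by rewrite ger0_norm.
Qed.

End Jsec.

Section Jsig.
Context {R : realType} {d : measure_display} {E : measurableType d}.
Variable lam : {sigma_finite_measure set E -> \bar R}.

Lemma J_inner rho (G : E -> R) c : dens lam rho -> bnd G ->
  (J lam rho G * c)%:E = (\int[lam]_a (G a * rho a * c)%:E)%E.
Proof.
move=> rh bG; rewrite EFinM J_EFin // -integralZr //; exact: J_int.
Qed.

Lemma bnd_sec (G : E * E -> R) b M : measurable_fun setT G -> (forall z, 0 <= G z <= M) ->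
  bnd (fun a => G (b, a)).
Proof.
move=> mG GM; split; first exact: measurable_fun_pair2.
exists M => a; have /andP[g0 gM] := GM (b, a); by rewrite ger0_norm.
Qed.

Lemma bnd_sec1 (G : E * E -> R) a M : measurable_fun setT G -> (forall z, 0 <= G z <= M) ->
  bnd (fun b => G (b, a)).
Proof.
move=> mG GM; split; first exact: measurable_fun_pair1.
exists M => b; have /andP[g0 gM] := GM (b, a); by rewrite ger0_norm.
Qed.

Lemma J_meas rho (G : E * E -> R) M : dens lam rho -> measurable_fun setT G ->
  (forall z, 0 <= G z <= M) ->
  measurable_fun setT (fun b => J lam rho (fun a => G (b, a))).
Proof.
move=> [r0 [mr ir]] mG GM.
apply: (measurableT_comp (fine_measurable _) _) => //.
apply: (measurable_fun_fubini_tonelli_F (fun z => (G z * rho z.2)%:E)).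
- apply/measurable_EFinP; apply: measurable_funM => //.
  exact: measurableT_comp mr measurable_snd.
- move=> z; rewrite lee_fin mulr_ge0 //; by have /andP[] := GM z.
Qed.

Lemma J_swap rho1 rho2 (G : E * E -> R) M : dens lam rho1 -> dens lam rho2 ->
  measurable_fun setT G -> (forall z, 0 <= G z <= M) ->
  J lam rho2 (fun b => J lam rho1 (fun a => G (b, a)))
  = J lam rho1 (fun a => J lam rho2 (fun b => G (b, a))).
Proof.
move=> r1 r2 mG GM.
rewrite /J /Rintegral; congr fine.
transitivity (\int[lam]_b \int[lam]_a (G (b, a) * rho1 a * rho2 b)%:E)%E.
  by apply: eq_integral => b _; rewrite (J_inner _ r1 (bnd_sec _ mG GM)).
transitivity (\int[lam]_a \int[lam]_b (G (b, a) * rho1 a * rho2 b)%:E)%E; last first.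
  apply: eq_integral => a _; rewrite (J_inner _ r2 (bnd_sec1 _ mG GM)).
  by apply: eq_integral => b _; rewrite mulrAC.
apply: (fubini_tonelli (fun z => (G z * rho1 z.2 * rho2 z.1)%:E)).
- apply/measurable_EFinP; apply: measurable_funM => //; first apply: measurable_funM => //.
  + exact: measurableT_comp r1.2.1 measurable_snd.
  + exact: measurableT_comp r2.2.1 measurable_fst.
- move=> z; rewrite lee_fin !mulr_ge0 //; [by have /andP[] := GM z|exact: r1.1|exact: r2.1].
Qed.

End Jsig.
Section Tup.
Context {R : realType} {d : measure_display} {E : measurableType d}.

Lemma prefix_snoc k (x : k.-tuple E) y : Defs.prefix (snoc x y) = x.
Proof.
apply: eq_from_tnth => i; rewrite /Defs.prefix tnth_mktuple /snoc.
rewrite (tnth_nth y) (tnth_nth y) /= nth_rcons size_tuple ltn_ord //.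
Qed.

Lemma tlast_snoc k (x : k.-tuple E) y : tlast (snoc x y) = y.
Proof.
by rewrite /tlast /snoc (tnth_nth y) /= nth_rcons size_tuple ltnn eqxx.
Qed.

Lemma measurable_snoc k (x : k.-tuple E) : measurable_fun setT (fun y => snoc x y).
Proof.
apply/measurable_fun_tnthP => j /=.
have [hj|hj] := ltnP j k.
  rewrite (_ : _ \o _ = fun _ => nth point x j) //.
  by apply: funext => y /=; rewrite /snoc (tnth_nth point) /= nth_rcons size_tuple hj.
have jk : nat_of_ord j = k by apply/eqP; rewrite eqn_leq hj -ltnS ltn_ord.
rewrite (_ : _ \o _ = id) //.
by apply: funext => y /=; rewrite /snoc (tnth_nth point) /= nth_rcons size_tuple jk ltnn eqxx.
Qed.

Variables (p0 : E -> R) (trans : E -> E -> R) (lik : nat -> E -> R).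

Lemma chain_rcons l prev (s : seq E) y :
  Defs.chain trans lik l prev (rcons s y) =
  Defs.chain trans lik l prev s * trans (last prev s) y * lik (l + size s)%N y.
Proof.
elim: s l prev => [|x s IH] l prev /=; first by rewrite addn0 mul1r mulr1.
by rewrite IH addnS -addSn !mulrA.
Qed.

Lemma gamma_snoc k (x : k.-tuple E) : (0 < k)%N ->
  exists e, forall y, Defs.gamma p0 trans lik (snoc x y) = Defs.gamma p0 trans lik x * trans e y * lik k y.
Proof.
case: x => -[|x0 s] /= /eqP hs hk; first by rewrite -hs in hk.
exists (last x0 s) => y; rewrite /snoc /= chain_rcons -hs /= add1n !mulrA //.
Qed.

Hypotheses (p00 : forall x, 0 <= p0 x) (tr0 : forall x y, 0 <= trans x y)
  (lik0 : forall l x, 0 <= lik l x).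

Lemma chain_ge0 l prev s : 0 <= Defs.chain trans lik l prev s.
Proof.
elim: s l prev => [|x s IH] l prev //=; by rewrite !mulr_ge0.
Qed.

Lemma gamma_ge0 s : 0 <= Defs.gamma p0 trans lik s.
Proof. case: s => [|x s] //=; by rewrite mulr_ge0 // chain_ge0. Qed.

End Tup.

Lemma fine_ratio (R : realType) (a b : R) : fine (Defs.ratio a b) = a / b.
Proof. by rewrite /Defs.ratio; case: ifPn => [/eqP ->|//]; rewrite invr0 mulr0. Qed.

Unset Implicit Arguments. Unset Strict Implicit.
Section Main.
Context {R : realType} {d : measure_display} {E : measurableType d}.
Variable lam : {measure set E -> \bar R}.
Hypothesis sf : sigma_finite setT lam.
Definition lamf : set E -> \bar R := lam.
HB.instance Definition _ := isMeasure.Build _ _ _ lamf (measure0 lam) (measure_ge0 lam)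
  (@measure_semi_sigma_additive _ _ _ lam).
HB.instance Definition _ := @Measure_isSigmaFinite.Build d E R lamf sf.

Variables (p0 : E -> R) (trans : E -> E -> R) (lik : nat -> E -> R)
  (q : forall k : nat, k.-tuple E -> E -> R).
Hypotheses (p00 : forall x, 0 <= p0 x) (tr0 : forall x y, 0 <= trans x y)
  (mtr : measurable_fun setT (fun xy : E * E => trans xy.1 xy.2))
  (lik0 : forall l x, 0 <= lik l x) (mlik : forall l, measurable_fun setT (lik l))
  (hZ : forall k, (0 < Z lam p0 trans lik k < +oo)%E)
  (q0 : forall k x y, 0 <= q k x y)
  (mq : forall k, measurable_fun setT (fun xy : k.-tuple E * E => q k xy.1 xy.2))
  (iq : forall k x, (\int[lam]_y (q k x y)%:E = 1)%E).
Variables (k N : nat) (xs : 'I_N -> k.-tuple E) (B : R).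
Hypotheses (hB : forall x : k.+1.-tuple E,
      inS lam p0 trans lik k x -> (weight p0 trans lik q x <= B%:E)%E)
  (k0 : (0 < k)%N) (N0 : (0 < N)%N)
  (hxs : forall i, inS lam p0 trans lik k.-1 (xs i))
  (hemp : 0 < emp_int xs (@pikk1 R d E lam p0 trans lik k)).

Local Notation T := (k.+1.-tuple E).
Local Notation G := (Defs.gamma p0 trans lik).
Definition s (i : 'I_N) (y : E) : T := snoc (xs i) y.
Definition qi (i : 'I_N) (y : E) := q k (xs i) y.
Definition w (x : T) : R := fine (weight p0 trans lik q x).
Definition h i y := w (s i y) * qi i y.
Definition B1 := Num.max B 1.
Definition fZ j := fine (Z lam p0 trans lik j).

Lemma fZ_gt0 j : 0 < fZ j.
Proof. by rewrite /fZ fine_gt0. Qed.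

Lemma piE j (x : seq E) : Defs.pi lam p0 trans lik j x = G x / fZ j.
Proof. by []. Qed.

Lemma inS_G j (x : seq E) : inS lam p0 trans lik j x <-> 0 < G x.
Proof.
rewrite /inS piE; split => hx; last by rewrite divr_gt0 // fZ_gt0.
have fi : 0 < (fZ j)^-1 by rewrite invr_gt0 fZ_gt0.
by rewrite (pmulr_lgt0 _ fi) in hx.
Qed.

Lemma Gi_gt0 i : 0 < G (xs i).
Proof. by apply/(inS_G (k.-1)); exact: hxs. Qed.

Lemma G_ge0 (x : seq E) : 0 <= G x.
Proof. exact: gamma_ge0. Qed.

Lemma wE (x : T) : w x = G x / (G (Defs.prefix x) * q k (Defs.prefix x) (tlast x)).
Proof. by rewrite /w /weight fine_ratio. Qed.

Lemma w_ge0 (x : T) : 0 <= w x.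
Proof. by rewrite wE divr_ge0 ?mulr_ge0 ?G_ge0. Qed.

Lemma D_neq0 (x : T) : 0 < G x -> G (Defs.prefix x) * q k (Defs.prefix x) (tlast x) != 0.
Proof.
move=> Gx; apply/negP => /eqP D0.
have := hB x (proj2 (inS_G k x) Gx); rewrite /weight /Defs.ratio D0 eqxx //.
Qed.

Lemma w_le (x : T) : w x <= B1.
Proof.
have [Gx|] := ltP 0 (G x).
  have := hB x (proj2 (inS_G k x) Gx); rewrite /weight /Defs.ratio (negbTE (D_neq0 x Gx)).
  rewrite lee_fin => h1; rewrite wE (le_trans h1) // /B1 le_max lexx //.
move=> G0; rewrite wE; have -> : G x = 0 by apply/le_anti; rewrite G0 G_ge0.
by rewrite mul0r /B1 le_max ler01 orbT.
Qed.

Lemma w_gt0 (x : T) : 0 < G x -> 0 < w x.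
Proof.
move=> Gx; rewrite wE divr_gt0 // lt_def (D_neq0 x Gx) /= mulr_ge0 // G_ge0. all: done.
Qed.

Lemma w_eq0 (x : T) : ~ (0 < G x) -> w x = 0.
Proof.
move/negP; rewrite -leNgt => G0; rewrite wE.
have -> : G x = 0 by apply/le_anti; rewrite G0 G_ge0.
by rewrite mul0r.
Qed.

Lemma B1_gt0 : 0 < B1.
Proof. by rewrite /B1 lt_max ltr01 orbT. Qed.

Definition al (x z : T) : R := Num.min 1 (w z / w x).

Lemma KintE (f : T -> R) (x : T) :
  Kint lam p0 trans lik q xs f x =
  N%:R^-1 * (\sum_(i < N) J lamf (qi i) (fun y => al x (s i y) * f (s i y)))
  + (1 - N%:R^-1 * \sum_(i < N) J lamf (qi i) (fun y => al x (s i y))) * f x.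
Proof. by []. Qed.

Lemma emp_intE (g : k.-tuple E -> R) : emp_int xs g = N%:R^-1 * \sum_(i < N) g (xs i).
Proof. by []. Qed.

Lemma pibreve_intE (f : T -> R) : pibreve_int lam p0 trans lik xs f =
  N%:R^-1 * (\sum_(i < N) J lamf (pibar lam p0 trans lik (xs i))
     (fun y => pikk1 lam p0 trans lik (Defs.prefix (s i y)) * f (s i y)))
  / emp_int xs (@pikk1 R d E lam p0 trans lik k).
Proof. by []. Qed.

Lemma s_prefix i y : Defs.prefix (s i y) = xs i.
Proof. exact: prefix_snoc. Qed.

Lemma s_tlast i y : tlast (s i y) = y.
Proof. exact: tlast_snoc. Qed.

Lemma w_s i y : w (s i y) = G (s i y) / (G (xs i) * qi i y).
Proof. by rewrite wE s_prefix s_tlast. Qed.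

Lemma h_eq i y : h i y = G (s i y) / G (xs i).
Proof.
rewrite /h w_s; have [q00|qn0] := eqVneq (qi i y) 0.
  have -> : G (s i y) = 0.
    apply/le_anti; rewrite G_ge0 andbT leNgt; apply/negP => Gs.
    by have := D_neq0 (s i y) Gs; rewrite s_prefix s_tlast -/(qi i y) q00 mulr0 eqxx.
  by rewrite q00 !(mul0r, mulr0).
by rewrite invfM mulrA mulfVK.
Qed.

Lemma mqi i : measurable_fun setT (qi i).
Proof. exact: (measurable_fun_pair2 (xs i) (mq k)). Qed.

Lemma mGs i : measurable_fun setT (fun y => G (s i y)).
Proof.
have [e he] := gamma_snoc p0 trans lik (xs i) k0.
rewrite (_ : (fun y => _) = fun y => G (xs i) * trans e y * lik k y); last first.
  by apply: funext => y; rewrite /s he.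
apply: measurable_funM => //; apply: measurable_funM => //.
exact: (measurable_fun_pair2 e mtr).
Qed.

Lemma mws i : measurable_fun setT (fun y => w (s i y)).
Proof.
rewrite (_ : (fun y => _) = fun y => G (s i y) * (G (xs i) * qi i y)^-1); last first.
  by apply: funext => y; rewrite w_s.
apply: measurable_funM; first exact: mGs.
apply: measurableT_comp; first exact: measurable_inv.
apply: measurable_funM => //; exact: mqi.
Qed.

Lemma dens_q i : dens lamf (qi i).
Proof.
split; first by move=> y; exact: q0.
split; first exact: mqi.
apply/integrableP; split; first by apply/measurable_EFinP; exact: mqi.
rewrite (eq_integral (fun y => (qi i y)%:E)); last first.
  by move=> y _ /=; rewrite ger0_norm //; exact: q0.
have -> : (\int[lamf]_y (qi i y)%:E = 1)%E by exact: (iq k (xs i)).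
exact: ltey.
Qed.

Lemma bnd_ws i : bnd (fun y => w (s i y)).
Proof.
split; first exact: mws.
by exists B1 => y; rewrite ger0_norm ?w_ge0 ?w_le.
Qed.

Lemma dens_h i : dens lamf (h i).
Proof.
split; first by move=> y; rewrite /h mulr_ge0 ?w_ge0 ?q0.
split; first by apply: measurable_funM; [exact: mws|exact: mqi].
exact: (J_int (dens_q i) (bnd_ws i)).
Qed.

Lemma Jq1 i : J lamf (qi i) (fun _ => 1) = 1.
Proof.
rewrite /J /Rintegral (eq_integral (fun y => (qi i y)%:E)); last first.
  by move=> y _; rewrite mul1r.
by rewrite (iq k (xs i)).
Qed.

Lemma al_ge0 x z : 0 <= al x z.
Proof. by rewrite /al le_min ler01 divr_ge0 ?w_ge0. Qed.

Lemma al_le1 x z : al x z <= 1.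
Proof. by rewrite /al ge_min lexx. Qed.

Lemma wal x z : w x * al x z = Num.min (w x) (w z).
Proof.
rewrite /al; have [wx0|wxp] := eqVneq (w x) 0.
  by rewrite wx0 mul0r min_l ?w_ge0.
have wx : 0 < w x by rewrite lt_def wxp w_ge0.
have [zx|zx] := leP (w z) (w x).
  rewrite min_r; last by rewrite ler_pdivrMr // mul1r.
  by rewrite mulrC mulfVK.
rewrite min_l; last by rewrite ler_pdivlMr // mul1r ltW.
by rewrite mulr1.
Qed.

Lemma al_lb x z : 0 < w x -> w z / B1 <= al x z.
Proof.
move=> wx; rewrite /al le_min ler_pdivrMr ?B1_gt0 // mul1r w_le /=.
by rewrite ler_wpM2l ?w_ge0 // lef_pV2 ?posrE ?B1_gt0 // w_le.
Qed.

Lemma al_w0 x z : w z = 0 -> al x z = 0.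
Proof. by move=> wz; rewrite /al wz mul0r min_r. Qed.

Definition Phi (g : T -> R) := \sum_(i < N) J lamf (h i) (fun y => g (s i y)).
Definition goodf (g : T -> R) :=
  (forall i, measurable_fun setT (fun y => g (s i y))) /\ (forall x, 0 <= g x <= 1).
Definition H i := J lamf (h i) (fun _ => 1).
Definition cc := fZ k.-1 / fZ k.

Lemma Gi_neq0 i : G (xs i) != 0.
Proof. by rewrite gt_eqF // Gi_gt0. Qed.
Lemma fZ_neq0 j : fZ j != 0.
Proof. by rewrite gt_eqF // fZ_gt0. Qed.

Lemma Jcst rho c : dens lamf rho -> J lamf rho (fun _ => c) = c * J lamf rho (fun _ => 1).
Proof.
move=> rh; rewrite -JZ //; last exact: bnd_cst.
by apply: J_ext => y; rewrite mulr1.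
Qed.

Lemma piMargE i : piMarg lam p0 trans lik (xs i) = G (xs i) / fZ k * H i.
Proof.
rewrite /H -Jcst; last exact: dens_h.
rewrite /piMarg /J /Rintegral; congr fine; apply: eq_integral => y _; congr EFin.
rewrite piE h_eq /s; have := Gi_neq0 i; have := fZ_neq0 k; move=> *; field.
by rewrite ?fZ_neq0 ?Gi_neq0.
Qed.

Lemma pikk1E i : pikk1 lam p0 trans lik (xs i) = cc * H i.
Proof.
rewrite /pikk1 piMargE piE /cc; have := Gi_neq0 i; have := fZ_neq0 k;
  have := fZ_neq0 k.-1; move=> *; field.
by rewrite ?fZ_neq0 ?Gi_neq0.
Qed.

Lemma pibarE i y : pibar lam p0 trans lik (xs i) y = h i y / H i.
Proof.
rewrite /pibar piMargE piE h_eq /s.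
have [->|Hn] := eqVneq (H i) 0; first by rewrite !(mulr0, invr0).
have := Gi_neq0 i; have := fZ_neq0 k; move=> *; field.
by rewrite ?fZ_neq0 ?Gi_neq0 ?Hn.
Qed.

Lemma bnd_good f i : goodf f -> bnd (fun y => f (s i y)).
Proof. move=> [mf f01]; apply: bnd01 => //; exact: mf. Qed.

Lemma J_h0 i F : H i = 0 -> bnd F -> (forall y, 0 <= F y <= 1) -> J lamf (h i) F = 0.
Proof.
move=> H0 bF F01; apply/le_anti; rewrite J_ge0 ?andbT //; last 2 first.
- exact: dens_h.
- by move=> y; have /andP[] := F01 y.
rewrite -H0; apply: J_le => //; [exact: dens_h|exact: bnd_cst|].
by move=> y; have /andP[] := F01 y.
Qed.

Lemma term_pibreve f i : goodf f ->
  J lamf (pibar lam p0 trans lik (xs i))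
     (fun y => pikk1 lam p0 trans lik (Defs.prefix (s i y)) * f (s i y))
  = cc * J lamf (h i) (fun y => f (s i y)).
Proof.
move=> gf; have [H0|Hn] := eqVneq (H i) 0.
  rewrite J_h0 //; [|exact: bnd_good|by move=> y; exact: gf.2].
  rewrite mulr0; rewrite -(J_h0 i (fun _ => 0) H0 (bnd_cst 0)); last by move=> y; rewrite lexx ler01.
  by apply: J_ext => y; rewrite pibarE H0 invr0 !mulr0 mul0r.
rewrite -JZ; [|exact: dens_h|exact: bnd_good].
apply: J_ext => y; rewrite pibarE s_prefix pikk1E; field => //.
Qed.

Lemma emp_pikk1 : emp_int xs (@pikk1 R d E lam p0 trans lik k)
  = N%:R^-1 * (cc * Phi (fun _ => 1)).
Proof.
rewrite emp_intE /Phi; congr (_ * _); rewrite mulr_sumr; apply: eq_bigr => i _.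
by rewrite pikk1E.
Qed.

Lemma pibreveE f : goodf f ->
  pibreve_int lam p0 trans lik xs f = Phi f / Phi (fun _ => 1).
Proof.
move=> gf; rewrite pibreve_intE emp_pikk1.
rewrite (eq_bigr (fun i => cc * J lamf (h i) (fun y => f (s i y)))); last first.
  by move=> i _; exact: term_pibreve.
rewrite -mulr_sumr -/(Phi f).
have e a : N%:R^-1 * (cc * a) = (N%:R^-1 * cc) * a by rewrite mulrA.
rewrite !e.
have u0 : N%:R^-1 * cc != 0.
  by rewrite mulf_neq0 // ?invr_eq0 ?pnatr_eq0 -?lt0n // /cc mulf_neq0 ?invr_eq0 ?fZ_neq0.
by rewrite invfM mulrACA mulfV // mul1r.
Qed.

Lemma m_al j i : measurable_fun setT (fun z : E * E => al (s j z.1) (s i z.2)).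
Proof.
apply: measurable_minr; first exact: measurable_cst.
apply: measurable_funM; first exact: measurableT_comp (mws i) measurable_snd.
apply: measurableT_comp; first exact: measurable_inv.
exact: measurableT_comp (mws j) measurable_fst.
Qed.

Lemma m_alx x i : measurable_fun setT (fun a => al x (s i a)).
Proof.
apply: measurable_minr; first exact: measurable_cst.
by apply: measurable_funM; [exact: mws|exact: measurable_cst].
Qed.

Lemma bnd_alx x i : bnd (fun a => al x (s i a)).
Proof. apply: bnd01; [exact: m_alx|by move=> a; rewrite al_ge0 al_le1]. Qed.

Lemma bnd_alxg x i g : goodf g -> bnd (fun a => al x (s i a) * g (s i a)).
Proof. move=> gg; apply: bndM; [exact: bnd_alx|exact: bnd_good]. Qed.

Lemma Jq_01 i F : bnd F -> (forall y, 0 <= F y <= 1) -> 0 <= J lamf (qi i) F <= 1.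
Proof.
move=> bF F01; rewrite J_ge0 /=; [|exact: dens_q|by move=> y; have /andP[] := F01 y].
rewrite -(Jq1 i); apply: J_le; [exact: dens_q|exact: bF|exact: bnd_cst|].
by move=> y; have /andP[] := F01 y.
Qed.

Lemma avg_01 (a : 'I_N -> R) : (forall i, 0 <= a i <= 1) ->
  0 <= N%:R^-1 * \sum_(i < N) a i <= 1.
Proof.
move=> a01; have Np : 0 < N%:R :> R by rewrite ltr0n.
rewrite mulr_ge0 ?invr_ge0 ?ler0n ?sumr_ge0 //=; last by move=> i _; have /andP[] := a01 i.
rewrite ler_pdivrMl // mulr1.
have -> : N%:R = \sum_(i < N) (1 : R) by rewrite sumr_const card_ord.
by apply: ler_sum => i _; have /andP[] := a01 i.
Qed.

Lemma Kint_01 g x : goodf g -> 0 <= Kint lam p0 trans lik q xs g x <= 1.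
Proof.
move=> gg; rewrite KintE.
set A := N%:R^-1 * _; set b := N%:R^-1 * _.
have Nn : 0 <= N%:R^-1 :> R by rewrite invr_ge0 ler0n.
have hA : 0 <= A <= 1.
  apply: avg_01 => i; apply: Jq_01; [exact: bnd_alxg|].
  move=> y; rewrite mulr_ge0 ?al_ge0 //=; last by have /andP[] := gg.2 (s i y).
  by rewrite mulr_ile1 ?al_ge0 ?al_le1 //; have /andP[] := gg.2 (s i y).
have hb : 0 <= b <= 1.
  by apply: avg_01 => i; apply: Jq_01; [exact: bnd_alx|move=> y; rewrite al_ge0 al_le1].
have Ab : A <= b.
  rewrite /A /b ler_wpM2l //; apply: ler_sum => i _; apply: J_le.
  - exact: dens_q.
  - exact: bnd_alxg.
  - exact: bnd_alx.
  - move=> y; rewrite ler_piMr ?al_ge0 //; by have /andP[] := gg.2 (s i y).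
have /andP[g0 g1] := gg.2 x; move: hA hb => /andP[A0 A1] /andP[b0 b1].
apply/andP; split; nra.
Qed.

Lemma m_alg j i g : goodf g ->
  measurable_fun setT (fun z : E * E => al (s j z.1) (s i z.2) * g (s i z.2)).
Proof.
move=> gg; apply: measurable_funM; first exact: m_al.
exact: measurableT_comp (gg.1 i) measurable_snd.
Qed.

Lemma alg_01 j i g : goodf g -> forall z : E * E,
  0 <= al (s j z.1) (s i z.2) * g (s i z.2) <= 1.
Proof.
move=> gg z; have /andP[g0 g1] := gg.2 (s i z.2).
by rewrite mulr_ge0 ?al_ge0 //= mulr_ile1 ?al_ge0 ?al_le1.
Qed.

Lemma goodf_Kint g : goodf g -> goodf (Kint lam p0 trans lik q xs g).
Proof.
move=> gg; split; last by move=> x; exact: Kint_01.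
move=> j; rewrite /=.
under eq_fun do rewrite KintE.
apply: measurable_funD.
  apply: measurable_funM; first exact: measurable_cst.
  apply: measurable_sum => i.
  have Hm := J_meas (dens_q i) (m_alg j i g gg) (alg_01 j i g gg).
  exact: Hm.
apply: measurable_funM; last exact: gg.1.
apply: measurable_funB; first exact: measurable_cst.
apply: measurable_funM; first exact: measurable_cst.
apply: measurable_sum => i.
have Hm := J_meas (M := 1) (dens_q i) (m_al j i) (fun z => introT andP (conj (al_ge0 _ _) (al_le1 _ _))).
exact: Hm.
Qed.

Lemma J_sum rho (F : 'I_N -> E -> R) : dens lamf rho -> (forall i, bnd (F i)) ->
  J lamf rho (fun y => \sum_(i < N) F i y) = \sum_(i < N) J lamf rho (F i).
Proof.
move=> rh bF.
suff : forall r : seq 'I_N, J lamf rho (fun y => \sum_(i <- r) F i y) = \sum_(i <- r) J lamf rho (F i)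
   /\ bnd (fun y => \sum_(i <- r) F i y) by move=> /(_ (index_enum _)) [].
elim => [|i r [IH bIH]].
  under eq_fun do rewrite big_nil.
  rewrite big_nil Jcst // mul0r; split => //; exact: bnd_cst.
under eq_fun do rewrite big_cons.
rewrite big_cons JD // IH; split => //; exact: bndD.
Qed.

Lemma bnd_sum (F : 'I_N -> E -> R) : (forall i, bnd (F i)) ->
  bnd (fun y => \sum_(i < N) F i y).
Proof.
move=> bF.
suff : forall r : seq 'I_N, bnd (fun y => \sum_(i <- r) F i y) by move=> /(_ (index_enum _)).
elim => [|i r IH].
  under eq_fun do rewrite big_nil; exact: bnd_cst.
under eq_fun do rewrite big_cons; exact: bndD.
Qed.

Lemma bndB (F F' : E -> R) : bnd F -> bnd F' -> bnd (fun y => F y - F' y).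
Proof.
move=> bF bF'; rewrite (_ : (fun y => F y - F' y) = fun y => F y + (-1) * F' y); last first.
  by apply: funext => y; rewrite mulN1r.
apply: bndD => //; apply: bndM => //; exact: bnd_cst.
Qed.

Lemma JB rho F F' : dens lamf rho -> bnd F -> bnd F' ->
  J lamf rho (fun y => F y - F' y) = J lamf rho F - J lamf rho F'.
Proof.
move=> rh bF bF'.
rewrite (_ : (fun y => F y - F' y) = fun y => F y + (-1) * F' y); last first.
  by apply: funext => y; rewrite mulN1r.
rewrite JD // ?JZ // ?mulN1r //; apply: bndM => //; exact: bnd_cst.
Qed.

Lemma J_swap' rho1 rho2 (G : E * E -> R) M : dens lamf rho1 -> dens lamf rho2 ->
  measurable_fun setT G -> (forall z, 0 <= G z <= M) ->
  J lamf rho2 (fun b => J lamf rho1 (fun a => G (b, a)))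
  = J lamf rho1 (fun a => J lamf rho2 (fun b => G (b, a))).
Proof. move=> r1 r2 mG GM; have H := J_swap r1 r2 mG GM; exact: H. Qed.

Section Inv.
Variable g : T -> R.
Hypothesis gg : goodf g.

Definition P i j b := J lamf (qi i) (fun a => al (s j b) (s i a) * g (s i a)).
Definition Rr i j b := J lamf (qi i) (fun a => al (s j b) (s i a)) * g (s j b).

Lemma Kint_s j b : Kint lam p0 trans lik q xs g (s j b) =
  g (s j b) + N%:R^-1 * \sum_(i < N) (P i j b - Rr i j b).
Proof.
rewrite KintE sumrB /Rr -mulr_suml /P; ring.
Qed.

Lemma bnd_P i j : bnd (P i j).
Proof.
split; first exact: (J_meas (dens_q i) (m_alg j i g gg) (alg_01 j i g gg)).
exists 1 => b; have /andP[a0 a1] := Jq_01 i _ (bnd_alxg (s j b) i g gg) (fun a => alg_01 j i g gg (b, a)).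
by rewrite ger0_norm.
Qed.

Lemma bnd_Rr i j : bnd (Rr i j).
Proof.
apply: bndM; last exact: bnd_good.
split; first exact: (J_meas (M := 1) (dens_q i) (m_al j i) (fun z => introT andP (conj (al_ge0 _ _) (al_le1 _ _)))).
exists 1 => b; have /andP[a0 a1] := Jq_01 i _ (bnd_alx (s j b) i) (fun a => introT andP (conj (al_ge0 (s j b) (s i a)) (al_le1 _ _))).
by rewrite ger0_norm.
Qed.

Definition Gm i j (z : E * E) := Num.min (w (s j z.1)) (w (s i z.2)) * g (s i z.2).

Lemma m_Gm i j : measurable_fun setT (Gm i j).
Proof.
apply: measurable_funM; last exact: measurableT_comp (gg.1 i) measurable_snd.
apply: measurable_minr; first exact: measurableT_comp (mws j) measurable_fst.
exact: measurableT_comp (mws i) measurable_snd.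
Qed.

Lemma Gm_bnd i j z : 0 <= Gm i j z <= B1.
Proof.
have /andP[g0 g1] := gg.2 (s i z.2).
have m0 : 0 <= Num.min (w (s j z.1)) (w (s i z.2)) by rewrite le_min !w_ge0.
rewrite /Gm mulr_ge0 //= -[B1]mulr1 ler_pM //.
by rewrite ge_min w_le.
Qed.

Lemma key i j : J lamf (h j) (P i j) = J lamf (h i) (Rr j i).
Proof.
transitivity (J lamf (qi j) (fun b => J lamf (qi i) (fun a => Gm i j (b, a)))).
  apply: J_ext => b; rewrite /h mulrA [P i j b * _]mulrC /P -JZ; last 2 first.
  - exact: dens_q.
  - exact: bnd_alxg.
  congr (_ * _); apply: J_ext => a; by rewrite mulrA wal.
rewrite (J_swap' _ _ _ _ (dens_q i) (dens_q j) (m_Gm i j) (Gm_bnd i j)).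
apply: J_ext => a; rewrite /Rr /h mulrA; congr (_ * _).
rewrite -mulrA mulrC -JZ; [|exact: dens_q|exact: bnd_alx].
apply: J_ext => b; congr (_ * _); rewrite /Gm /= minC -wal; ring.
Qed.

Lemma Phi_Kint : Phi (Kint lam p0 trans lik q xs g) = Phi g.
Proof.
rewrite /Phi.
transitivity (\sum_(j < N) (J lamf (h j) (fun b => g (s j b))
   + N%:R^-1 * \sum_(i < N) (J lamf (h j) (P i j) - J lamf (h j) (Rr i j)))).
  apply: eq_bigr => j _.
  rewrite (_ : (fun y => _) = fun b => g (s j b) + N%:R^-1 * \sum_(i < N) (P i j b - Rr i j b));
    last by apply: funext => b; exact: Kint_s.
  have bS : bnd (fun b => \sum_(i < N) (P i j b - Rr i j b)).
    apply: (bnd_sum (fun i b => P i j b - Rr i j b)) => i.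
    apply: bndB; [exact: bnd_P|exact: bnd_Rr].
  rewrite JD; [|exact: dens_h|exact: bnd_good|by apply: bndM => //; exact: bnd_cst].
  rewrite JZ //; [|exact: dens_h].
  rewrite J_sum; [|exact: dens_h|by move=> i; apply: bndB; [exact: bnd_P|exact: bnd_Rr]].
  congr (_ + _ * _); apply: eq_bigr => i _.
  rewrite JB //; [exact: dens_h|exact: bnd_P|exact: bnd_Rr].
rewrite big_split /= -mulr_sumr.
rewrite [X in _ * X](eq_bigr (fun j => \sum_(i < N) J lamf (h j) (P i j) - \sum_(i < N) J lamf (h j) (Rr i j)));
  last by move=> j _; rewrite sumrB.
rewrite sumrB.
have -> : \sum_(j < N) \sum_(i < N) J lamf (h j) (P i j)
  = \sum_(j < N) \sum_(i < N) J lamf (h j) (Rr i j).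
  under eq_bigr do under eq_bigr do rewrite key.
  by rewrite exchange_big.
by rewrite subrr mulr0 addr0.
Qed.

End Inv.

Definition goodb (g : T -> R) := forall i, bnd (fun y => g (s i y)).

Lemma goodf_b g : goodf g -> goodb g.
Proof. by move=> gg i; exact: bnd_good. Qed.

Lemma goodb_aff g c1 c0 : goodb g -> goodb (fun z => c1 * g z + c0).
Proof. move=> gb i; apply: bndD; [apply: bndM; [exact: bnd_cst|exact: gb]|exact: bnd_cst]. Qed.

Lemma Kint_aff g c1 c0 x : goodb g ->
  Kint lam p0 trans lik q xs (fun z => c1 * g z + c0) x
  = c1 * Kint lam p0 trans lik q xs g x + c0.
Proof.
move=> gb; rewrite !KintE.
have e i : J lamf (qi i) (fun y => al x (s i y) * (c1 * g (s i y) + c0))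
   = c1 * J lamf (qi i) (fun y => al x (s i y) * g (s i y)) + c0 * J lamf (qi i) (fun y => al x (s i y)).
  have bA := bnd_alx x i; have bg := gb i.
  rewrite -JZ; [|exact: dens_q|exact: bndM].
  rewrite -[c0 * _]JZ; [|exact: dens_q|exact: bA].
  rewrite -JD; [|exact: dens_q|by apply: bndM; [exact: bnd_cst|exact: bndM]|by apply: bndM; [exact: bnd_cst|]].
  by apply: J_ext => y; congr (_ * _); ring.
under eq_bigr do rewrite e.
rewrite big_split /= -!mulr_sumr; ring.
Qed.

Lemma Phi_aff g c1 c0 : goodb g ->
  Phi (fun z => c1 * g z + c0) = c1 * Phi g + c0 * Phi (fun _ => 1).
Proof.
move=> gb; rewrite /Phi !mulr_sumr -big_split; apply: eq_bigr => i _ /=.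
rewrite JD; [|exact: dens_h|by apply: bndM; [exact: bnd_cst|exact: gb]|exact: bnd_cst].
rewrite JZ; [|exact: dens_h|exact: gb].
by rewrite Jcst //; exact: dens_h.
Qed.

Lemma NB1_gt0 : 0 < N%:R * B1.
Proof. by rewrite mulr_gt0 ?ltr0n ?B1_gt0. Qed.

Lemma minor u (x : T) : goodb u -> 0 < G x -> (forall z : T, 0 < G z -> 0 <= u z) ->
  Phi u / (N%:R * B1) <= Kint lam p0 trans lik q xs u x.
Proof.
move=> ub Gx u0; rewrite KintE.
have hb : 0 <= N%:R^-1 * \sum_(i < N) J lamf (qi i) (fun y => al x (s i y)) <= 1.
  by apply: avg_01 => i; apply: Jq_01; [exact: bnd_alx|move=> y; rewrite al_ge0 al_le1].
move: hb => /andP[_ b1].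
have ux := u0 x Gx.
rewrite -[X in X <= _]addr0; apply: lerD; last by rewrite mulr_ge0 // subr_ge0.
rewrite /Phi invfM [N%:R^-1 * _]mulrC mulrA mulrAC; apply: ler_wpM2r; first by rewrite invr_ge0 ler0n.
rewrite mulr_suml; apply: ler_sum => i _.
have bw : bnd (fun a => w (s i a) / B1 * u (s i a)).
  apply: bndM; [apply: bndM; [exact: bnd_ws|exact: bnd_cst]|exact: ub].
rewrite (_ : J lamf (h i) _ / B1 = J lamf (qi i) (fun a => w (s i a) / B1 * u (s i a))); last first.
  rewrite mulrC -JZ; [|exact: dens_h|exact: ub].
  by apply: J_ext => a; rewrite /h; ring.
apply: J_le; [exact: dens_q|exact: bw|by apply: bndM; [exact: bnd_alx|exact: ub]|].
move=> a; have [Gs|Gs] := pselect (0 < G (s i a)).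
  apply: ler_wpM2r; first exact: u0.
  by apply: al_lb; exact: w_gt0.
by rewrite (w_eq0 _ Gs) (al_w0 _ _ (w_eq0 _ Gs)) !mul0r.
Qed.

Lemma step g (x : T) c r : goodf g -> 0 < G x ->
  (forall z : T, 0 < G z -> c - r <= g z <= c + r) -> Phi g = c * Phi (fun _ => 1) ->
  c - (1 - Phi (fun _ => 1) / (N%:R * B1)) * r <= Kint lam p0 trans lik q xs g x
  <= c + (1 - Phi (fun _ => 1) / (N%:R * B1)) * r.
Proof.
move=> gg Gx gb Pg; have gbb := goodf_b g gg.
set e := Phi (fun _ => 1) / (N%:R * B1).
have lo := minor (fun z => 1 * g z + - (c - r)) x (goodb_aff g 1 (- (c - r)) gbb) Gx.
rewrite Kint_aff // Phi_aff // Pg in lo.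
have hi := minor (fun z => (-1) * g z + (c + r)) x (goodb_aff g (-1) (c + r) gbb) Gx.
rewrite Kint_aff // Phi_aff // Pg in hi.
have E1 : (1 * (c * Phi (fun _ => 1)) + - (c - r) * Phi (fun _ => 1)) / (N%:R * B1) = r * e.
  by rewrite /e; ring.
have E2 : (-1 * (c * Phi (fun _ => 1)) + (c + r) * Phi (fun _ => 1)) / (N%:R * B1) = r * e.
  by rewrite /e; ring.
rewrite E1 in lo; rewrite E2 in hi.
have l1 : r * e <= 1 * Kint lam p0 trans lik q xs g x + - (c - r).
  apply: lo => z Gz; have /andP[a b] := gb z Gz; lra.
have h1 : r * e <= -1 * Kint lam p0 trans lik q xs g x + (c + r).
  apply: hi => z Gz; have /andP[a b] := gb z Gz; lra.
apply/andP; split; lra.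
Qed.

Lemma goodf_ind (A : set T) : measurable A -> goodf (\1_A).
Proof.
move=> mA; split.
  move=> i; apply: measurableT_comp; [exact: measurable_indic|exact: measurable_snoc].
by move=> x; rewrite indicE ler0n lern1 leq_b1.
Qed.

Lemma goodf_Kn n (A : set T) : measurable A ->
  goodf (fun y => Kn lam p0 trans lik q xs n y A).
Proof.
move=> mA; elim: n => [|n IH]; first exact: goodf_ind.
exact: (goodf_Kint _ IH).
Qed.

Lemma Phi_Kn n (A : set T) : measurable A ->
  Phi (fun y => Kn lam p0 trans lik q xs n y A) = Phi (\1_A).
Proof.
move=> mA; elim: n => [|n IH] //.
rewrite -IH; have HH := Phi_Kint _ (goodf_Kn n A mA); exact: HH.
Qed.

Lemma Phi1_gt0 : 0 < Phi (fun _ => 1).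
Proof.
move: hemp; rewrite emp_pikk1 => he.
have u0 : 0 < N%:R^-1 * cc.
  by rewrite mulr_gt0 ?invr_gt0 ?ltr0n // /cc divr_gt0 ?fZ_gt0.
by rewrite mulrA pmulr_rgt0 in he.
Qed.

Lemma Phi1_le : Phi (fun _ => 1) <= N%:R * B1.
Proof.
rewrite /Phi (_ : N%:R * B1 = \sum_(i < N) B1); last by rewrite sumr_const card_ord mulr_natl.
apply: ler_sum => i _.
rewrite (_ : J lamf (h i) _ = J lamf (qi i) (fun a => w (s i a))); last first.
  by apply: J_ext => a; rewrite /h mul1r.
rewrite -[B1]mulr1 -(Jq1 i) -Jcst; last exact: dens_q.
apply: J_le; [exact: dens_q|exact: bnd_ws|exact: bnd_cst|move=> y; exact: w_le].
Qed.

Lemma PhiA01 (A : set T) : measurable A -> 0 <= Phi (\1_A) / Phi (fun _ => 1) <= 1.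
Proof.
move=> mA; have P1 := Phi1_gt0.
have [mi i01] := goodf_ind A mA.
have n0 : 0 <= Phi (\1_A).
  by apply: sumr_ge0 => i _; apply: J_ge0; [exact: dens_h|move=> y; have /andP[] := i01 (s i y)].
rewrite divr_ge0 ?(ltW P1) //=.
rewrite ler_pdivrMr // mul1r; apply: ler_sum => i _.
apply: J_le; [exact: dens_h|exact: (bnd_good _ i (goodf_ind A mA))|exact: bnd_cst|].
by move=> y; have /andP[] := i01 (s i y).
Qed.

Definition eps := Phi (fun _ => 1) / (N%:R * B1).

Lemma erg (A : set T) n (x : T) : measurable A -> 0 < G x ->
  `| Kn lam p0 trans lik q xs n x A - Phi (\1_A) / Phi (fun _ => 1) | <= (1 - eps) ^+ n.
Proof.
move=> mA; have c01 := PhiA01 A mA.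
set c := Phi (\1_A) / Phi (fun _ => 1) in c01 *.
elim: n x => [|n IH] x Gx.
  rewrite expr0; have /andP[a b] := (goodf_Kn 0 A mA).2 x; move: c01 => /andP[c0 c1].
  rewrite ler_norml; apply/andP; split; lra.
have Pg : Phi (fun y => Kn lam p0 trans lik q xs n y A) = c * Phi (fun _ => 1).
  by rewrite Phi_Kn // /c mulfVK // gt_eqF // Phi1_gt0.
have gb : forall z : T, 0 < G z -> c - (1 - eps) ^+ n <= Kn lam p0 trans lik q xs n z A <= c + (1 - eps) ^+ n.
  move=> z Gz; have := IH z Gz; rewrite ler_norml => /andP[a b]; apply/andP; split; lra.
have := step _ x c _ (goodf_Kn n A mA) Gx gb Pg; rewrite -/eps => /andP[a b].
rewrite /= exprS ler_norml; apply/andP; split; lra.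
Qed.

Lemma main_result :
  (forall A : set T, measurable A ->
     pibreve_int lam p0 trans lik xs (fun x => Kn lam p0 trans lik q xs 1 x A)
     = pibreve lam p0 trans lik xs A)
  /\
  (exists (C rho : R), 0 <= rho < 1 /\
     forall (n : nat) (x : T) (A : set T),
       inS lam p0 trans lik k x -> measurable A ->
       `| Kn lam p0 trans lik q xs n x A - pibreve lam p0 trans lik xs A | <= C * rho ^+ n).
Proof.
split.
  move=> A mA; rewrite /pibreve (pibreveE _ (goodf_Kn 1 A mA)) (pibreveE _ (goodf_ind A mA)).
  by rewrite (Phi_Kn 1 A mA).
exists 1, (1 - eps); split.
  have e0 : 0 < eps by rewrite /eps divr_gt0 ?Phi1_gt0 ?NB1_gt0.
  have e1 : eps <= 1 by rewrite /eps ler_pdivrMr ?NB1_gt0 // mul1r Phi1_le.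
  apply/andP; split; lra.
move=> n x A xS mA; rewrite mul1r /pibreve (pibreveE _ (goodf_ind A mA)).
by apply: erg => //; apply/(inS_G k).
Qed.

End Main.

Theorem proposition1 (R : realType) (d : measure_display) (E : measurableType d)
  (lam : {measure set E -> \bar R})
  (p0 : E -> R) (trans : E -> E -> R) (lik : nat -> E -> R)
  (q : forall k : nat, k.-tuple E -> E -> R) :
  (* reference measure *)
  sigma_finite setT lam ->
  (* initial density *)
  (forall x, 0 <= p0 x) -> measurable_fun setT p0 ->
  (\int[lam]_x (p0 x)%:E = 1)%E ->
  (* transition densities *)
  (forall x y, 0 <= trans x y) ->
  measurable_fun setT (fun xy : E * E => trans xy.1 xy.2) ->
  (forall x, \int[lam]_y (trans x y)%:E = 1)%E ->
  (* likelihoods at the fixed observations *)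
  (forall l x, 0 <= lik l x) -> (forall l, measurable_fun setT (lik l)) ->
  (* normalising constants *)
  (forall k, (0 < Z lam p0 trans lik k < +oo)%E) ->
  (* proposals (q 0 is q_0) *)
  (forall k x y, 0 <= q k x y) ->
  (forall k, measurable_fun setT (fun xy : k.-tuple E * E => q k xy.1 xy.2)) ->
  (forall k x, \int[lam]_y (q k x y)%:E = 1)%E ->
  (* bounded weights on S_k, for every k >= 0 *)
  (forall k, exists B : R, forall x : k.+1.-tuple E,
      inS lam p0 trans lik k x -> (weight p0 trans lik q x <= B%:E)%E) ->
  forall (k : nat), (0 < k)%N ->
  forall (N : nat) (xs : 'I_N -> k.-tuple E), (0 < N)%N ->
  (* samples at time k-1 lie in S_{k-1} *)
  (forall i, inS lam p0 trans lik k.-1 (xs i)) ->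
  (* breve{pi}_k is well defined: pihat_{k-1}(pi_{k/k-1}) > 0 *)
  0 < emp_int xs (@pikk1 R d E lam p0 trans lik k) ->
  (* invariance *)
  (forall A : set (k.+1.-tuple E), measurable A ->
     pibreve_int lam p0 trans lik xs
       (fun x => Kn lam p0 trans lik q xs 1 x A)
     = pibreve lam p0 trans lik xs A)
  /\
  (* uniform ergodicity on S_k *)
  (exists (C rho : R), 0 <= rho < 1 /\
     forall (n : nat) (x : k.+1.-tuple E) (A : set (k.+1.-tuple E)),
       inS lam p0 trans lik k x -> measurable A ->
       `| Kn lam p0 trans lik q xs n x A - pibreve lam p0 trans lik xs A |
         <= C * rho ^+ n).
Proof.
move=> sf p00 mp0 ip0 tr0 mtr itr lik0 mlik hZ q0 mq iq hB k k0 N xs N0 hxs hemp.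
have [B hB'] := hB k.
by eapply main_result; eassumption.
Qed.
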